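(* Let $\epsilon_1>0$ and let $\epsilon_5>0$ be a constant with $\left(\frac{\log e}{8}\right)\epsilon_5^4>14\epsilon_1$. Let $S\subseteq V$ be nonempty, let $v$ be uniform in $S$, and define $X_i,Y_i$ as in the context. If $\sum_{i=1}^n H(X_i\mid X_{<i},Y_{<i})\ge\left(1-\frac{6\epsilon_1}{\log n}\right)\log k$, then (for $n$ sufficiently large) all but at most $\epsilon_5 n$ of the variables $i\in[n]$ are typical.
   Context: Setting: variables $x_1,\dots,x_n$, constant-size alphabet $A$, $\rho=\sqrt n\log\log n$, $k=\binom n\rho$. $V$ is the set of pairs $v=(T,y)$ with $T\subseteq[n]$, $|T|=\rho$, $y:T\to A$. For $v=(T,y)$ uniform in $S\subseteq V$: $X_i$ is the indicator of $i\in T$, $Y_i=y(i)$ if $X_i=1$ and $Y_i=\bot$ otherwise. A prefix of length $i-1$ is a value $w_{i-1}$ of $(X_{<i},Y_{<i})$. A prefix $w_{i-1}$ is typical if $(1-\epsilon_5)\rho/n<\Pr[X_i=1\mid (X_{<i},Y_{<i})=w_{i-1}]<(1+\epsilon_5)\rho/n$. A variable $i$ is typical if $\sum_{\text{typical } w_{i-1}}\Pr[(X_{<i},Y_{<i})=w_{i-1}]\ge1-\epsilon_5$. $H$ denotes Shannon entropy, logs base 2. *)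

(* Defs.v *)
From mathcomp Require Import all_boot all_order all_algebra.
From mathcomp Require Import all_classical all_reals.
From mathcomp.analysis Require Import sequences exp.
Set Implicit Arguments. Unset Strict Implicit. Unset Printing Implicit Defensive.
Import Order.TTheory GRing.Theory Num.Theory.
Local Open Scope ring_scope.

Section Defs.
Variable R : realType.

Definition log2 (x : R) : R := ln x / ln 2.

Definition xlog2x (x : R) : R := if x == 0 then 0 else x * log2 x.

Definition rho (n : nat) : nat := Num.truncn (Num.sqrt (n%:R : R) * log2 (log2 n%:R)).

Definition kk (n : nat) : nat := 'C(n, rho n).

Variable A : finType.
Variable n : nat.

(* An element v = (T, y) of V is encoded as w : 'I_n -> option A,
   with T = {i | w i != None} and y i = the value in Some. *)
Definition elt := {ffun 'I_n -> option A}.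

Definition Vset : {set elt} := [set w : elt | #|[set i | w i != None]| == rho n].

(* X_i = indicator of i \in T ; Y_i = y(i) if i \in T, bot (= None) otherwise *)
Definition Xv (w : elt) (i : 'I_n) : bool := w i != None.
Definition Yv (w : elt) (i : 'I_n) : option A := w i.

Definition prefix_t := {ffun 'I_n -> option (bool * option A)}.
Definition prefix (i : 'I_n) (w : elt) : prefix_t :=
  [ffun j : 'I_n => if (j < i)%N then Some (Xv w j, Yv w j) else None].

Variable S : {set elt}.

Definition Pr (E : pred elt) : R := #|[set w in S | E w]|%:R / #|S|%:R.
Definition Prc (E F : pred elt) : R := Pr (predI E F) / Pr F.

Definition prefix_ev (i : 'I_n) (p : prefix_t) : pred elt := fun w => prefix i w == p.

Definition condH (i : 'I_n) : R :=
  \sum_(p : prefix_t) Pr (prefix_ev i p) *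
     (- \sum_(b : bool) xlog2x (Prc (fun w => Xv w i == b) (prefix_ev i p))).

Variable eps5 : R.

Definition typical_prefix (i : 'I_n) (p : prefix_t) : bool :=
  let q := Prc (fun w => Xv w i) (prefix_ev i p) in
  ((1 - eps5) * (rho n)%:R / n%:R < q) && (q < (1 + eps5) * (rho n)%:R / n%:R).

Definition typical_var (i : 'I_n) : bool :=
  \sum_(p : prefix_t | typical_prefix i p) Pr (prefix_ev i p) >= 1 - eps5.

End Defs.

(* Main.v *)
Require Import Defs.
From mathcomp Require Import all_boot all_order all_algebra.
From mathcomp Require Import all_classical all_reals.
From mathcomp.analysis Require Import sequences exp.
From mathcomp Require Import ring lra.
Import Order.TTheory GRing.Theory Num.Theory.
Local Open Scope ring_scope.


Section Analytic.
Variable R : realType.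

Definition xln (x : R) : R := if x == 0 then 0 else x * ln x.

Lemma ln_ge1V (x : R) : 0 < x -> 1 - x^-1 <= ln x.
Proof.
move=> x0.
have h : -1 < x^-1 - 1 by rewrite -subr_gt0 opprK subrK invr_gt0.
have := le_ln1Dx h; rewrite addrC subrK lnV ?posrE //; lra.
Qed.

Lemma T2_bound (a q : R) : 0 < a < 1 -> 0 <= q <= 1 ->
  a - q <= xln (1 - q) - (1 - q) * ln (1 - a).
Proof.
move=> /andP[a0 a1] /andP[q0 q1]; rewrite /xln.
have [E0|q1'] := eqVneq (1 - q) 0; first by rewrite E0 mul0r; lra.
have qp : 0 < 1 - q by rewrite lt_neqAle eq_sym q1' subr_ge0 q1.
have ap : 0 < 1 - a by rewrite subr_gt0.
have H := ln_ge1V _ (divr_gt0 qp ap).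
rewrite ln_div ?posrE // invf_div in H.
have E : (1 - q) * (1 - (1 - a) / (1 - q)) = a - q.
  by field; rewrite q1'.
rewrite -E -mulrBr; apply: ler_wpM2l; [exact: ltW qp|exact: H].
Qed.

Lemma T1_bound (a q : R) : 0 < a -> 0 <= q ->
  (Num.sqrt q - Num.sqrt a) ^+ 2 - (a - q) <= xln q - q * ln a.
Proof.
move=> a0 q0; rewrite /xln.
have sa := sqr_sqrtr (ltW a0); have sq := sqr_sqrtr q0.
have [q00|qn0] := eqVneq q 0.
  by rewrite q00 sqrtr0 sub0r sqrrN sa mul0r; lra.
have qp : 0 < q by rewrite lt_neqAle eq_sym qn0 q0.
set r := Num.sqrt q; set s := Num.sqrt a.
have rp : 0 < r by rewrite sqrtr_gt0.
have sp : 0 < s by rewrite sqrtr_gt0.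
have H := ln_ge1V _ (divr_gt0 rp sp).
rewrite ln_div ?posrE // invf_div in H.
have lq : ln q = ln r *+ 2 by rewrite -lnXn // sq.
have la : ln a = ln s *+ 2 by rewrite -lnXn // sa.
rewrite lq la -sq -sa.
have E : r ^+ 2 * (1 - s / r) = r ^+ 2 - r * s by field; rewrite gt_eqF.
have H2 : r ^+ 2 - r * s <= r ^+ 2 * (ln r - ln s).
  rewrite -E; apply: ler_wpM2l => //; exact: sqr_ge0.
rewrite !mulr2n.
rewrite -/r -/s; nra.
Qed.

Lemma Dn_bound (a q : R) : 0 < a < 1 -> 0 <= q <= 1 ->
  (Num.sqrt q - Num.sqrt a) ^+ 2 <=
  xln q + xln (1 - q) - q * ln a - (1 - q) * ln (1 - a).
Proof.
move=> ha hq; have := @T2_bound a q ha hq.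
case/andP: ha => a0 _; case/andP: hq => q0 _.
have := @T1_bound a q a0 q0; lra.
Qed.

Lemma sq_bound (a q e : R) : 0 < e < 1 -> 0 < a -> 0 <= q ->
  ~~ (((1 - e) * a < q) && (q < (1 + e) * a)) ->
  a * e ^+ 2 / 9 <= (Num.sqrt q - Num.sqrt a) ^+ 2.
Proof.
move=> /andP[e0 e1] a0 q0 H.
have sa := sqr_sqrtr (ltW a0); have sq := sqr_sqrtr q0.
set r := Num.sqrt q in sq *; set s := Num.sqrt a in sa *.
have r0 : 0 <= r by rewrite sqrtr_ge0.
have s0 : 0 < s by rewrite sqrtr_gt0.
rewrite -sa.
move: H; rewrite negb_and -!leNgt => /orP[H|H].
-
  have h1 : r ^+ 2 <= (1 - e / 2) ^+ 2 * s ^+ 2.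
    rewrite sq sa; apply: le_trans H _; rewrite ler_wpM2r ?(ltW a0) //; nra.
  have c0 : 0 <= (1 - e / 2) * s by apply: mulr_ge0; lra.
  have h2 : r <= (1 - e / 2) * s by rewrite -(ler_pXn2r (n:=2)) ?nnegrE // exprMn.
  nra.
- have h1 : (1 + e / 3) ^+ 2 * s ^+ 2 <= r ^+ 2.
    rewrite sq sa; apply: le_trans H; rewrite ler_wpM2r ?(ltW a0) //; nra.
  have c0 : 0 <= (1 + e / 3) * s by apply: mulr_ge0; lra.
  have h2 : (1 + e / 3) * s <= r by rewrite -(ler_pXn2r (n:=2)) ?nnegrE // exprMn.
  nra.
Qed.

End Analytic.
Arguments xln {R}.


Lemma ffact_le_exp n m : (n ^_ m <= n ^ m)%N.
Proof.
elim: m => [|m IH]; first by rewrite ffactn0.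
by rewrite ffactnSr expnSr leq_mul // leq_subr.
Qed.

Lemma exp_le_ffact n m : ((n - m) ^ m <= n ^_ m)%N.
Proof.
elim: m => [|m IH]; first by rewrite ffactn0.
rewrite ffactnSr expnSr leq_mul //; last by rewrite leq_sub2l.
apply: leq_trans IH; have [->//|m0] := posnP m.
by rewrite leq_exp2r // leq_sub2l.
Qed.

Section B.
Variable R : realType.

Lemma ln_fact m : (0 < m)%N ->
  ln ((m`!)%:R : R) <= m%:R * ln m%:R - m%:R + ln m%:R + 1.
Proof.
elim: m => [//|m IH] _.
have [->|m0] := posnP m; first by rewrite [1`!]/= ln1; lra.
have {IH} IH := IH m0.
have mp : (0 : R) < m%:R by rewrite ltr0n.
have m1p : (0 : R) < m.+1%:R by rewrite ltr0n.
rewrite factS natrM lnM ?posrE ?ltr0n ?fact_gt0 //.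
have H := @ln_ge1V R _ (divr_gt0 m1p mp).
rewrite ln_div ?posrE // invf_div in H.
have E : m.+1%:R * (1 - m%:R / m.+1%:R) = 1 :> R.
  by rewrite -natr1; field; rewrite natr1 gt_eqF.
have H2 : 1 <= m.+1%:R * (ln m.+1%:R - ln (m%:R : R)).
  by rewrite -{1}E; apply: ler_wpM2l; [exact: ltW|exact: H].
rewrite -natr1 in H2 *; nra.
Qed.


Lemma CE_bound (n r : nat) : (0 < r)%N -> (r < n)%N ->
  - (r%:R * ln (r%:R / n%:R)) - (n%:R - r%:R) * ln (1 - r%:R / n%:R)
  - ln ('C(n, r)%:R : R)
  <= r%:R ^+ 2 / (n%:R - r%:R) + ln r%:R + 1.
Proof.
move=> r0 rn.
have rp : (0 : R) < r%:R by rewrite ltr0n.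
have np : (0 : R) < n%:R by rewrite ltr0n (leq_trans r0 (ltnW rn)).
have nrp : (0 : R) < n%:R - r%:R by rewrite subr_gt0 ltr_nat.
have e1 : 1 - r%:R / n%:R = (n%:R - r%:R) / n%:R :> R by field; rewrite gt_eqF.
have L1 := @ln_ge1V R _ (divr_gt0 nrp np).
rewrite invf_div in L1.
have E2 : (n%:R - r%:R) * (1 - n%:R / (n%:R - r%:R)) = - r%:R :> R.
  by field; rewrite gt_eqF.
have H1 : - r%:R <= (n%:R - r%:R) * ln ((n%:R - r%:R) / n%:R) :> R.
  by have := ler_wpM2l (ltW nrp) L1; rewrite E2.
have E3 : ln ((n%:R - r%:R) / n%:R) = ln (n%:R - r%:R) - ln (n%:R : R).
  by rewrite ln_div ?posrE.
have E4 : (1 - n%:R / (n%:R - r%:R)) = - (r%:R / (n%:R - r%:R)) :> R.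
  by field; rewrite gt_eqF.
rewrite E4 in L1.
have kb : ((n - r) ^ r <= 'C(n, r) * r`!)%N by rewrite bin_ffact exp_le_ffact.
have kp : (0 < 'C(n, r))%N by rewrite bin_gt0 ltnW.
have Hk : r%:R * ln (n%:R - r%:R) <= ln ('C(n, r)%:R : R) + ln (r`!%:R : R).
  rewrite -lnM ?posrE ?ltr0n ?fact_gt0 // -natrM.
  rewrite mulr_natl -lnXn // -natrB ?(ltnW rn) // -natrX.
  rewrite ler_ln ?posrE ?ltr0n ?ler_nat ?expn_gt0 ?subn_gt0 ?rn //.
  by rewrite muln_gt0 kp fact_gt0.
have Hf := @ln_fact r r0.
rewrite e1 E3 ln_div ?posrE //.
have E5 : r%:R ^+ 2 / (n%:R - r%:R) = r%:R * (r%:R / (n%:R - r%:R)) :> R.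
  by rewrite expr2 mulrA.
rewrite E5.
have H6 : r%:R * (ln (n%:R) - r%:R / (n%:R - r%:R)) <= r%:R * ln (n%:R - r%:R) :> R.
  apply: ler_wpM2l; [exact: ltW|]; rewrite E3 in L1; lra.
rewrite E3 in H1.
nra.
Qed.

Lemma lnC_le (n r : nat) : (0 < n)%N -> (r <= n)%N ->
  ln ('C(n, r)%:R : R) <= r%:R * ln n%:R.
Proof.
move=> n0 rn.
rewrite mulr_natl -lnXn ?ltr0n // -natrX ler_ln ?posrE ?ltr0n ?bin_gt0 ?expn_gt0 ?n0 //.
rewrite ler_nat; apply: leq_trans (ffact_le_exp n r).
by rewrite -bin_ffact leq_pmulr ?fact_gt0.
Qed.

End B.

Section C.
Variable R : realType.

Lemma rho_asymp (eta : R) : 0 < eta -> exists N : nat, forall n, (N <= n)%N ->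
  [/\ (0 < rho R n)%N, (2 * rho R n <= n)%N &
      (rho R n)%:R ^+ 2 / (n%:R - (rho R n)%:R) + ln (rho R n)%:R + 1
        <= eta * (rho R n)%:R].
Proof.
move=> etap.
have l2 : (0 : R) < ln 2 by rewrite ln_gt0 // ltr1n.
set c := ln (2 : R) ^+ 2.
have cp : 0 < c by rewrite exprn_gt0.
set M := 2 + 8 / c + 16 / (c * eta) + 20 / eta.
have h1 : 0 <= 8 / c by rewrite divr_ge0 // ltW.
have h2 : 0 <= 16 / (c * eta) by rewrite divr_ge0 // ltW // mulr_gt0.
have h3 : 0 <= 20 / eta by rewrite divr_ge0 // ltW.
have M0 : 0 <= M by rewrite /M; lra.
exists (Num.trunc (M ^+ 4)).+1 => n Nn.
set Nr : R := n%:R.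
have NM : M ^+ 4 < Nr.
  apply: lt_le_trans (truncnS_gt _) _; rewrite /Nr ler_nat //.
have Np : 0 < Nr by apply: le_lt_trans NM; rewrite exprn_ge0.
set s := Num.sqrt (Num.sqrt Nr).
have s0 : 0 <= s by rewrite sqrtr_ge0.
have sN : Num.sqrt Nr = s ^+ 2 by rewrite sqr_sqrtr // sqrtr_ge0.
have s4 : s ^+ 4 = Nr by rewrite (_ : 4 = 2 * 2)%N // exprM -sN sqr_sqrtr // ltW.
have sM : M <= s.
  rewrite leNgt; apply/negP => sM.
  have : s ^+ 4 <= M ^+ 4 by rewrite ler_pXn2r ?nnegrE // ltW.
  by rewrite s4 leNgt NM.
have s2 : 2 <= s by apply: le_trans sM; rewrite /M; lra.
have sp : 0 < s by apply: lt_le_trans s2.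
have hc : 8 <= c * s.
  have : 8 / c <= s by apply: le_trans sM; rewrite /M; lra.
  by rewrite ler_pdivrMr // mulrC.
have he : 16 <= c * eta * s.
  have : 16 / (c * eta) <= s by apply: le_trans sM; rewrite /M; lra.
  by rewrite ler_pdivrMr ?mulr_gt0 // mulrC.
have he2 : 20 <= eta * s.
  have : 20 / eta <= s by apply: le_trans sM; rewrite /M; lra.
  by rewrite ler_pdivrMr // mulrC.
have lnN : ln Nr = 4 * ln s by rewrite -s4 lnXn // mulr_natl.
have lns : ln s <= s by apply: ltW; exact: ln_sublinear.
have ls2 : ln 2 <= ln s by rewrite ler_ln ?posrE.
set L := log2 Nr.
have LE : L = 4 * ln s / ln 2 by rewrite /L /log2 lnN.
have L2 : 2 <= L by rewrite LE ler_pdivlMr //; nra.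
have Lp : 0 < L by apply: lt_le_trans L2.
have LL1 : 1 <= log2 L.
  rewrite /log2 ler_pdivlMr // mul1r ler_ln ?posrE //; lra.
have LL2 : log2 L * c <= 4 * s.
  rewrite /log2 /c.
  have H : ln L <= 4 * ln s / ln 2 by rewrite -LE; apply: ltW; exact: ln_sublinear.
  have H2 : ln L / ln 2 <= 4 * ln s / ln 2 / ln 2 by rewrite ler_pM2r ?invr_gt0.
  have E : 4 * ln s / ln 2 / ln 2 * ln 2 ^+ 2 = 4 * ln s by field; rewrite gt_eqF.
  have := ler_wpM2r (ltW cp) H2; rewrite /c E; lra.
set x := Num.sqrt Nr * log2 L.
have x0 : 0 <= x by rewrite /x sN mulr_ge0 ?exprn_ge0 //; lra.
have xlo : s ^+ 2 <= x by rewrite /x sN ler_peMr ?exprn_ge0.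
have xhi : x * c <= 4 * s ^+ 3.
  rewrite /x sN -mulrA; have H3 := ler_wpM2l (exprn_ge0 2 s0) LL2.
  have E3 : s ^+ 3 = s ^+ 2 * s by rewrite exprSr. rewrite E3; nra.
have rE : rho R n = Num.trunc x by [].
have /andP[rlo rhi] := truncn_itv x0.
rewrite -rE in rlo rhi.
set r : R := (rho R n)%:R in rlo rhi *.
have rhi' : s ^+ 2 - 1 < r by rewrite -natr1 in rhi; lra.
have r3 : 3 < r by nra.
have rp : 0 < r by lra.
have rc : r * c <= 4 * s ^+ 3 by apply: le_trans xhi; rewrite ler_wpM2r // ltW.
have r2N : 2 * r <= Nr.
  rewrite -s4; rewrite -(ler_pM2l cp).
  have : c * s * s ^+ 3 <= c * s ^+ 4 by rewrite -mulrA -exprS.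
  have : 8 * s ^+ 3 <= c * s * s ^+ 3 by rewrite ler_wpM2r // exprn_ge0.
  nra.
split.
- by rewrite -(ltr0n R) -/r.
- by rewrite -(ler_nat R) natrM -/r -/Nr.
have NrP : 0 < Nr - r by lra.
have A1 : r ^+ 2 / (Nr - r) <= eta * r / 2.
  rewrite ler_pdivrMr //.
  have s3 : 0 <= s ^+ 3 by rewrite exprn_ge0.
  have B1 : 4 * s ^+ 3 <= c * eta * s * s ^+ 3 / 4 by nra.
  have B2 : c * eta * s * s ^+ 3 = c * (eta * Nr) by rewrite -s4 -mulrA -exprS; ring.
  have B3 : r <= eta * Nr / 4.
    rewrite -(ler_pM2l cp); have := le_trans rc B1; rewrite B2; lra.
  have B4 : r * r <= r * (eta * Nr / 4) by rewrite ler_pM2l.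
  have B5 : eta * Nr / 4 <= eta * (Nr - r) / 2 by nra.
  have B6 : r * (eta * Nr / 4) <= r * (eta * (Nr - r) / 2) by rewrite ler_pM2l.
  rewrite expr2; apply: le_trans B4 _; apply: le_trans B6 _; lra.
have lr : ln r <= 4 * s.
  apply: le_trans (_ : ln Nr <= _); last by rewrite lnN; lra.
  rewrite ler_ln ?posrE //; lra.
have A2 : ln r + 1 <= eta * r / 2.
  have : 5 * s <= eta * s * s / 4 by nra.
  nra.
lra.
Qed.

End C.
Section D.
Variable R : realType.
Variable A : finType.
Variable n : nat.
Variable S : {set elt A n}.
Hypothesis S0 : S != finset.set0.

Local Notation Pr := (Pr R S).

Lemma card_sum (P : pred (elt A n)) :
  #|[set w in S | P w]| = (\sum_(w in S) (P w : nat))%N.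
Proof.
rewrite -sum1_card big_mkcond [RHS]big_mkcond /=; apply: eq_bigr => w _.
by rewrite inE; case: (w \in S); case: (P w).
Qed.

Lemma Pr_ext (E E' : pred (elt A n)) : (forall w, E w = E' w) -> Pr E = Pr E'.
Proof.
move=> h; rewrite /Defs.Pr; congr (_%:R / _); apply: eq_card => w.
by rewrite !inE h.
Qed.

Lemma Sp : (0 : R) < #|S|%:R.
Proof. by rewrite ltr0n card_gt0. Qed.

Lemma Pr_ge0 E : 0 <= Pr E.
Proof. by rewrite /Defs.Pr divr_ge0. Qed.

Lemma Pr_mono (E F : pred (elt A n)) : (forall w, E w -> F w) -> Pr E <= Pr F.
Proof.
move=> h; rewrite /Defs.Pr ler_wpM2r ?invr_ge0 // ler_nat.
apply: subset_leq_card; apply/fintype.subsetP => w; rewrite !inE => /andP[-> /h ->].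
by [].
Qed.

Lemma PrT : Pr predT = 1.
Proof.
rewrite /Defs.Pr (_ : #|[set w in S | predT w]| = #|S|) ?divff ?gt_eqF ?Sp //.
by apply: eq_card => w; rewrite !inE andbT.
Qed.

Lemma sum_prefix (E : pred (elt A n)) i :
  \sum_(p : prefix_t A n) Pr (predI E (prefix_ev i p)) = Pr E.
Proof.
rewrite /Defs.Pr -mulr_suml -natr_sum; congr (_%:R / _).
under eq_bigr => p _ do rewrite card_sum.
rewrite exchange_big card_sum; apply: eq_bigr => w _ /=.
rewrite (bigD1 (Defs.prefix i w)) //= /prefix_ev eqxx andbT big1 ?addn0 //.
by move=> p /negbTE; rewrite eq_sym => ->; rewrite andbF.
Qed.

Lemma Pr_compl (E F : pred (elt A n)) :
  Pr (predI (predC E) F) = Pr F - Pr (predI E F).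
Proof.
apply/eqP; rewrite eq_sym subr_eq; apply/eqP.
rewrite /Defs.Pr -mulrDl -natrD !card_sum -big_split /=; congr (_%:R / _).
by apply: eq_bigr => w _; case: (E w); case: (F w).
Qed.

Definition Pp i p := Pr (prefix_ev i p).
Definition qp i p := Prc R S (fun w => Xv w i) (prefix_ev i p).
Definition PX i := Pr (fun w => Xv w i).

Lemma F1 i : \sum_p Pp i p = 1.
Proof.
rewrite -PrT -(sum_prefix predT i); apply: eq_bigr => p _.
exact: Pr_ext.
Qed.

Lemma PpqP i p : Pp i p * qp i p = Pr (predI (fun w => Xv w i) (prefix_ev i p)).
Proof.
rewrite /qp /Prc -/(Pp i p).
have [E|E] := eqVneq (Pp i p) 0.
  have h : Pr (predI (fun w => Xv w i) (prefix_ev i p)) <= Pp i p.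
    by apply: Pr_mono => w /andP[].
  rewrite E mul0r; apply: le_anti; rewrite Pr_ge0 /=; by move: h; rewrite E.
by rewrite mulrC divfK.
Qed.

Lemma F2 i : \sum_p Pp i p * qp i p = PX i.
Proof.
rewrite /PX -(sum_prefix _ i); apply: eq_bigr => p _; exact: PpqP.
Qed.

Lemma qp01 i p : 0 <= qp i p <= 1.
Proof.
rewrite /qp /Prc -/(Pp i p).
have [E|E] := eqVneq (Pp i p) 0; first by rewrite E invr0 mulr0 lexx ler01.
have Pp0 : 0 < Pp i p by rewrite lt_neqAle eq_sym E Pr_ge0.
rewrite divr_ge0 ?Pr_ge0 //= ler_pdivrMr // mul1r.
by apply: Pr_mono => w /andP[].
Qed.

Lemma Pp_ge0 i p : 0 <= Pp i p.
Proof. exact: Pr_ge0. Qed.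

Lemma Prc_true i p : Prc R S (fun w => Xv w i == true) (prefix_ev i p) = qp i p.
Proof.
rewrite /qp /Prc; congr (_ / _); apply: Pr_ext => w /=; by rewrite eqb_id.
Qed.

Lemma Prc_false i p : Pp i p != 0 ->
  Prc R S (fun w => Xv w i == false) (prefix_ev i p) = 1 - qp i p.
Proof.
move=> h; rewrite /qp /Prc -/(Pp i p).
rewrite (@Pr_ext _ (predI (predC (fun w => Xv w i)) (prefix_ev i p))); last first.
  by move=> w /=; case: (Xv w i).
by rewrite Pr_compl -/(Pp i p) mulrBl divff.
Qed.

Lemma l2x (x : R) : ln 2 * xlog2x x = xln x.
Proof.
have l2 : (0 : R) < ln 2 by rewrite ln_gt0 // ltr1n.
rewrite /xlog2x /xln /log2; case: (x == 0); first by rewrite mulr0.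
by field; rewrite gt_eqF.
Qed.

Definition Dn (a q : R) := xln q + xln (1 - q) - q * ln a - (1 - q) * ln (1 - a).

Lemma condH_eq i : ln 2 * condH R S i =
  - \sum_p Pp i p * (xln (qp i p) + xln (1 - qp i p)).
Proof.
rewrite /condH mulr_sumr -sumrN; apply: eq_bigr => p _.
rewrite big_bool /= -/(Pp i p).
have [E|E] := eqVneq (Pp i p) 0; first by rewrite E !mul0r mulr0 oppr0.
rewrite Prc_true Prc_false // -!l2x; ring.
Qed.

Lemma G_eq i (a : R) : \sum_p Pp i p * Dn a (qp i p) =
  - (PX i * ln a) - (1 - PX i) * ln (1 - a) - ln 2 * condH R S i.
Proof.
rewrite condH_eq opprK.
have H : \sum_p (Pp i p * qp i p * ln a + (Pp i p - Pp i p * qp i p) * ln (1 - a))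
    = PX i * ln a + (1 - PX i) * ln (1 - a).
  by rewrite big_split /= -!mulr_suml sumrB F1 F2.
transitivity (\sum_p Pp i p * (xln (qp i p) + xln (1 - qp i p)) -
  \sum_p (Pp i p * qp i p * ln a + (Pp i p - Pp i p * qp i p) * ln (1 - a))).
  by rewrite -sumrB; apply: eq_bigr => p _; rewrite /Dn; ring.
rewrite H; ring.
Qed.

Lemma Dn_ge_sq (a q : R) : 0 < a < 1 -> 0 <= q <= 1 ->
  (Num.sqrt q - Num.sqrt a) ^+ 2 <= Dn a q.
Proof. exact: (@Dn_bound R a q). Qed.

Lemma G_ge0 i (a : R) : 0 < a < 1 -> 0 <= \sum_p Pp i p * Dn a (qp i p).
Proof.
move=> ha; apply: sumr_ge0 => p _; apply: mulr_ge0; first exact: Pp_ge0.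
apply: le_trans (@Dn_ge_sq a _ ha (qp01 i p)); exact: sqr_ge0.
Qed.

Lemma G_nontyp i (e : R) : 0 < e < 1 ->
  let a := (rho R n)%:R / n%:R in 0 < a < 1 ->
  ~~ typical_var S e i ->
  e * (a * e ^+ 2 / 9) <= \sum_p Pp i p * Dn a (qp i p).
Proof.
move=> he a ha; rewrite /typical_var -ltNge => ht.
have a0 : 0 < a by case/andP: ha.
set c := a * e ^+ 2 / 9.
have c0 : 0 <= c by rewrite /c divr_ge0 // mulr_ge0 ?sqr_ge0 // ltW.
rewrite (bigID (typical_prefix S e i)) /=.
have h1 : 0 <= \sum_(p | typical_prefix S e i p) Pp i p * Dn a (qp i p).
  apply: sumr_ge0 => p _; apply: mulr_ge0; first exact: Pp_ge0.
  apply: le_trans (@Dn_ge_sq a _ ha (qp01 i p)); exact: sqr_ge0.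
have h2 : \sum_(p | ~~ typical_prefix S e i p) Pp i p * c <=
          \sum_(p | ~~ typical_prefix S e i p) Pp i p * Dn a (qp i p).
  apply: ler_sum => p hp; apply: ler_wpM2l; first exact: Pp_ge0.
  apply: le_trans (@Dn_ge_sq a _ ha (qp01 i p)).
  apply: sq_bound => //; first by case/andP: (qp01 i p).
  by move: hp; rewrite /typical_prefix -/(qp i p) -!mulrA.
have h4 : \sum_(p | ~~ typical_prefix S e i p) Pp i p =
          1 - \sum_(p | typical_prefix S e i p) Pp i p.
  by rewrite -(F1 i) [X in _ = X - _](bigID (typical_prefix S e i)) /=; ring.
rewrite -mulr_suml h4 in h2.
have h5 : e * c <= (1 - \sum_(p | typical_prefix S e i p) Pp i p) * c.
  by apply: ler_wpM2r => //; rewrite /Pp; lra.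
lra.
Qed.

Lemma sumPX : S \subset Vset R A n -> \sum_i PX i = (rho R n)%:R.
Proof.
move=> SV; rewrite /PX /Defs.Pr -mulr_suml -natr_sum.
under eq_bigr => i _ do rewrite card_sum.
rewrite exchange_big /=.
rewrite (eq_bigr (fun _ => rho R n)); last first.
  move=> w wS; have := fintype.subsetP SV w wS; rewrite inE => /eqP <-.
  apply: esym; rewrite -sum1_card big_mkcond /=.
  by apply: eq_bigr => j _; rewrite inE /Xv; case: (w j != None).
rewrite natr_sum sumr_const -[_ *+ #|S|]mulr_natr mulfK // gt_eqF //; exact: Sp.
Qed.

End D.

Theorem mainTheorem5 (R : realType) (A : finType) (eps1 eps5 : R) :
  0 < eps1 -> 0 < eps5 ->
  (log2 (expR 1) / 8) * eps5 ^+ 4 > 14 * eps1 ->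
  exists N : nat, forall (n : nat), (N <= n)%N ->
  forall S : {set elt A n},
    S != finset.set0 -> S \subset Vset R A n ->
    \sum_(i < n) condH R S i >= (1 - 6 * eps1 / log2 n%:R) * log2 (kk R n)%:R ->
    #|[set i : 'I_n | ~~ typical_var S eps5 i]|%:R <= eps5 * n%:R.
Proof.
move=> e1p e5p hyp.
have l2 : (0 : R) < ln 2 by rewrite ln_gt0 // ltr1n.
have [e51|e51] := leP 1 eps5.
  exists 0%N => n _ S _ _ _.
  have h : (#|[set i : 'I_n | ~~ typical_var S eps5 i]| <= n)%N.
    by apply: leq_trans (max_card _) _; rewrite card_ord.
  have h' : (#|[set i : 'I_n | ~~ typical_var S eps5 i]|%:R <= n%:R :> R) by rewrite ler_nat.
  have n0 : (0 : R) <= n%:R by [].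
  nra.
set eta := eps5 ^+ 4 / 9 - 6 * eps1 * ln 2.
have etap : 0 < eta.
  have E : eps5 ^+ 4 = (log2 (expR 1) / 8 * eps5 ^+ 4) * (8 * ln 2).
    by rewrite /log2 expRK; field; rewrite gt_eqF.
  have : 14 * eps1 * (8 * ln 2) < eps5 ^+ 4.
    by rewrite E ltr_pM2r // mulr_gt0.
  rewrite /eta; nra.
have [N HN] := @rho_asymp R eta etap.
exists N => n Nn S S0 SV H.
have [r0 r2n Hr] := HN n Nn.
set rr := rho R n in r0 r2n Hr *.
set r : R := rr%:R in Hr *.
set Nr : R := n%:R.
have rp : 0 < r by rewrite ltr0n.
have rn : (rr < n)%N by apply: leq_trans r2n; rewrite mul2n -addnn -addn1 leq_add2l.
have n0 : (0 < n)%N by apply: leq_trans rn.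
have Np : 0 < Nr by rewrite ltr0n.
have rNr : r < Nr by rewrite ltr_nat.
set a := r / Nr.
have ha : 0 < a < 1 by rewrite divr_gt0 //= ltr_pdivrMr // mul1r.
set G := fun i : 'I_n => \sum_p Pp R A n S i p * Dn R a (qp R A n S i p).
have T : \sum_i G i = - (r * ln a) - (Nr - r) * ln (1 - a) - ln 2 * \sum_i condH R S i.
  rewrite /G (eq_bigr _ (fun i _ => @G_eq R A n S S0 i a)).
  rewrite !sumrB -!mulr_suml -mulr_sumr sumrB sumr_const card_ord (@sumPX R A n S S0 SV) -/rr -/r.
  by rewrite sumrN -mulr_suml (@sumPX R A n S S0 SV) -/r.
set m := #|[set i : 'I_n | ~~ typical_var S eps5 i]|.
set c := eps5 * (a * eps5 ^+ 2 / 9).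
have cp : 0 < c by rewrite /c !mulr_gt0 ?invr_gt0 ?exprn_gt0 //; case/andP: ha.
have Lo : m%:R * c <= \sum_i G i.
  rewrite (bigID (fun i => i \in [set i : 'I_n | ~~ typical_var S eps5 i])) /=.
  have h1 : 0 <= \sum_(i | i \notin [set i : 'I_n | ~~ typical_var S eps5 i]) G i.
    by apply: sumr_ge0 => i _; apply: G_ge0.
  have h2 : m%:R * c <= \sum_(i | i \in [set i : 'I_n | ~~ typical_var S eps5 i]) G i.
    rewrite mulr_natl -sumr_const; apply: ler_sum => i; rewrite inE => hi.
    by apply: G_nontyp => //; rewrite e5p.
  lra.
have lN : 0 < ln Nr.
  rewrite ln_gt0 // /Nr ltr1n; apply: leq_trans r2n; rewrite mul2n -addnn; exact: (leq_add r0 r0).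
have Hk := @lnC_le R n rr n0 (ltnW rn).
have HCE := @CE_bound R n rr r0 rn.
rewrite /kk -/rr in H.
have E1 : ln 2 * ((1 - 6 * eps1 / log2 Nr) * log2 ('C(n, rr))%:R)
   = ln ('C(n, rr))%:R - 6 * eps1 * ln 2 * (ln ('C(n, rr))%:R / ln Nr).
  by rewrite /log2; field; rewrite !gt_eqF.
have H2 := ler_wpM2l (ltW l2) H; rewrite E1 in H2.
have H3 : ln ('C(n, rr))%:R / ln Nr <= r by rewrite ler_pdivrMr.
have H4 : 6 * eps1 * ln 2 * (ln ('C(n, rr))%:R / ln Nr) <= 6 * eps1 * ln 2 * r.
  by rewrite ler_wpM2l // ltW // !mulr_gt0.
have Up : \sum_i G i <= eps5 ^+ 4 / 9 * r.
  rewrite T; rewrite -/Nr -/r -/a in HCE.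
  have : eta * r = eps5 ^+ 4 / 9 * r - 6 * eps1 * ln 2 * r by rewrite /eta; ring.
  lra.
have Fin : m%:R * c <= eps5 * Nr * c.
  have -> : eps5 * Nr * c = eps5 ^+ 4 / 9 * r.
    by rewrite /c /a; field; rewrite gt_eqF.
  exact: le_trans Lo Up.
by rewrite ler_pM2r in Fin.
Qed.
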